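(* Let $\mathbb A$ be a graph of groups, let $\mathcal B$ be an $\mathbb A$-graph with associated graph of groups $\mathbb B$, let $u_0\in VB$, $v_0=[u_0]$ and $G=\pi_1(\mathbb A,v_0)$. Then: (1) if $p,p'$ are $\sim$-equivalent $\mathbb B$-paths, then $\mu(p)\sim\mu(p')$ as $\mathbb A$-paths; (2) the map $\mu$ restricted to $\mathbb B$-paths from $u_0$ to $u_0$ induces a homomorphism $\nu:\pi_1(\mathbb B,u_0)\to G$; (3) $\overline{L(\mathcal B,u_0)}=\nu(\pi_1(\mathbb B,u_0))$, in particular $\overline{L(\mathcal B,u_0)}$ is a subgroup of $G$; (4) there is a $\nu$-equivariant simplicial map $\phi:\widetilde{(\mathbb B,u_0)}\to\widetilde{(\mathbb A,v_0)}$ sending base-vertex to base-vertex, given on vertices by $\phi(\bar pB_u)=\overline{\mu(p)}A_{[u]}$.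
   Context: Graphs are in Serre's sense (edges come in pairs $e,e^{-1}$, $o(e)=t(e^{-1})$). A graph of groups $\mathbb A$ has vertex groups $A_v$, edge groups $A_e=A_{e^{-1}}$, monomorphisms $\alpha_e:A_e\to A_{o(e)}$, $\omega_e:A_e\to A_{t(e)}$, $\alpha_{e^{-1}}=\omega_e$. An $\mathbb A$-path from $v$ to $v'$ is a sequence $a_0,e_1,a_1,\dots,e_k,a_k$ ($k\ge0$) with $e_1,\dots,e_k$ an edge path from $v$ to $v'$, $a_0\in A_v$, $a_k\in A_{v'}$, $a_i\in A_{t(e_i)}$. The relation $\sim$ is the equivalence relation on $\mathbb A$-paths generated (modulo concatenation) by $a,e,\omega_e(c),e^{-1},\bar a\sim a\alpha_e(c)\bar a$ ($c\in A_e$, $a,\bar a\in A_{o(e)}$); $\bar p$ denotes the class, and $\pi_1(\mathbb A,v_0)$ is the group of classes of $\mathbb A$-paths from $v_0$ to $v_0$ under concatenation. The Bass–Serre tree $\widetilde{(\mathbb A,v_0)}$ has vertices the classes $\bar pA_v$ of $\mathbb A$-paths $p$ from $v_0$ to $v$ under $p\approx p'\iff p\sim p'a$ for some $a\in A_v$; $\bar pA_v$ and $\overline{pae}A_{t(e)}$ are adjacent for $a\in A_v$, $o(e)=v$; base-vertex $\bar1A_{v_0}$; $\pi_1$ acts by $\bar q\cdot\bar pA_v=\overline{qp}A_v$. An $\mathbb A$-graph $\mathcal B$ is a graph $B$ with a graph morphism $[\cdot]:B\to A$, a subgroup $B_u\le A_{[u]}$ for each $u\in VB$, and elements $f_\alpha\in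 A_{[o(f)]}$, $f_\omega\in A_{[t(f)]}$ for each $f\in EB$ with $(f^{-1})_\alpha=(f_\omega)^{-1}$. Its associated graph of groups $\mathbb B$ has underlying graph $B$, vertex groups $B_u$, edge groups $B_f=\alpha_{[f]}^{-1}(f_\alpha^{-1}B_{o(f)}f_\alpha)\cap\omega_{[f]}^{-1}(f_\omega B_{t(f)}f_\omega^{-1})\le A_{[f]}$ and $\alpha_f(g)=f_\alpha\alpha_{[f]}(g)f_\alpha^{-1}$. For a $\mathbb B$-path $p=b_0,f_1,b_1,\dots,f_s,b_s$ put $\mu(p)=(b_0(f_1)_\alpha),[f_1],((f_1)_\omega b_1(f_2)_\alpha),\dots,[f_s],((f_s)_\omega b_s)$, an $\mathbb A$-path. An $\mathbb B$-path is reduced if no subsequence $f,\omega_f(c),f^{-1}$ (with $c\in B_f$) occurs. $L(\mathcal B,u_0)$ is the set of $\mu(p)$ for reduced $\mathbb B$-paths $p$ from $u_0$ to $u_0$, and $\overline{L(\mathcal B,u_0)}$ the set of their $\sim$-classes in $\pi_1(\mathbb A,[u_0])$. *)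

(* Defs.v *)
From Stdlib Require Import Relations Bool.



Record group := Group {
  gcar :> Type;
  gmul : gcar -> gcar -> gcar;
  gone : gcar;
  ginv : gcar -> gcar;
  gmulA : forall x y z, gmul x (gmul y z) = gmul (gmul x y) z;
  gmul1g : forall x, gmul gone x = x;
  gmulVg : forall x, gmul (ginv x) x = gone }.
Arguments gmul {g} _ _.
Arguments gone {g}.
Arguments ginv {g} _.

(* Graphs in Serre's sense.  Oriented edges are pairs (geometric edge,  *)
(* orientation); e^{-1} flips the orientation, so e^{-1} <> e and       *)
(* (e^{-1})^{-1} = e; o is arbitrary and t(e) := o(e^{-1}).  Every Serre *)
(* graph is isomorphic to one of this form (choose an orientation).     *)
Record graph := Graph { gV : Type; gEg : Type; gends : gEg * bool -> gV }.
Definition gE (G : graph) : Type := (gEg G * bool)%type.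
Definition einv {G : graph} (e : gE G) : gE G := (fst e, negb (snd e)).
Definition eo {G : graph} (e : gE G) : gV G := gends G e.
Definition et {G : graph} (e : gE G) : gV G := gends G (einv e).

Lemma einv_inv (G : graph) (e : gE G) : einv (einv e) = e.
Proof. destruct e as [g b]; destruct b; reflexivity. Qed.

Definition tinv {G : graph} (e : gE G) : et (einv e) = eo e :=
  f_equal (gends G) (einv_inv G e).

(* Graphs of groups.  Edge groups are indexed by geometric edges, so    *)
(* A_e = A_{e^{-1}} holds definitionally; alpha_e : A_e -> A_{o(e)} is  *)
(* a monomorphism and omega_e := alpha_{e^{-1}} : A_e -> A_{t(e)}.      *)
Record gog := GoG {
  ggr : graph;
  Vgrp : gV ggr -> group;
  Egrp : gEg ggr -> group;
  alpha : forall e : gE ggr, Egrp (fst e) -> Vgrp (eo e);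
  alpha_mul : forall e x y, alpha e (gmul x y) = gmul (alpha e x) (alpha e y);
  alpha_inj : forall e x y, alpha e x = alpha e y -> x = y }.

Definition omega (A : gog) (e : gE (ggr A)) : Egrp A (fst e) -> Vgrp A (et e) :=
  alpha A (einv e).

(* Paths  a_0, e_1, a_1, ..., e_k, a_k  in a graph with a family F of   *)
(* vertex groups.  [pcons e a q] is  a, e, (q)  with a in F(o e).       *)
Inductive gpath (G : graph) (F : gV G -> group) : gV G -> gV G -> Type :=
| pnil : forall v : gV G, F v -> gpath G F v v
| pcons : forall (e : gE G) (w : gV G), F (eo e) -> gpath G F (et e) w -> gpath G F (eo e) w.
Arguments gpath {G} F _ _.
Arguments pnil {G F} v _.
Arguments pcons {G F} e {w} _ _.

Section PathOps.
Context {G : graph} {F : gV G -> group}.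

Definition castV {x y : gV G} (H : x = y) (a : F x) : F y :=
  eq_rect x (fun z => gcar (F z)) a y H.

Definition pcast {u u' w w' : gV G} (H1 : u = u') (H2 : w = w')
  (p : gpath F u w) : gpath F u' w' :=
  eq_rect w (fun z => gpath F u' z) (eq_rect u (fun z => gpath F z w) p u' H1) w' H2.

Definition lmul {v w} (p : gpath F v w) : F v -> gpath F v w :=
  match p in gpath _ v w return F v -> gpath F v w with
  | pnil v a => fun x => pnil v (gmul x a)
  | pcons e a q => fun x => pcons e (gmul x a) q
  end.

Fixpoint pcat {u v w} (p : gpath F u v) : gpath F v w -> gpath F u w :=
  match p in gpath _ u v return gpath F v w -> gpath F u w with
  | pnil _ a => fun q => lmul q a
  | pcons e a p' => fun q => pcons e a (pcat p' q)
  end.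

(* inverse path: a_k^{-1}, e_k^{-1}, ..., e_1^{-1}, a_0^{-1} *)
Fixpoint prev {v w} (p : gpath F v w) : gpath F w v :=
  match p in gpath _ v w return gpath F w v with
  | pnil v a => pnil v (ginv a)
  | pcons e a q =>
      pcat (prev q)
        (pcast (eq_refl : eo (einv e) = et e) (tinv e)
           (pcons (einv e) gone (pnil _ (castV (eq_sym (tinv e)) (ginv a)))))
  end.

Fixpoint allin (S : forall v, F v -> Prop) {v w} (p : gpath F v w) : Prop :=
  match p with
  | pnil v a => S v a
  | pcons e a q => S (eo e) a /\ allin S q
  end.

(* The equivalence relation ~ , for edge groups EG, edge maps al
   (omega_e := al (e^{-1})), admissible edge-group elements cP, and an
   admissibility predicate Ok on paths (the relation is the equivalence
   relation on Ok-paths generated by the elementary moves). *)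
Section Step.
Context {EG : gEg G -> Type} (al : forall e : gE G, EG (fst e) -> F (eo e))
  (cP : forall e : gE G, EG (fst e) -> Prop).

Definition redexL (e : gE G) (a : F (eo e)) (c : EG (fst e)) (ab : F (et (einv e)))
  : gpath F (eo e) (et (einv e)) :=
  pcons e a (pcons (einv e) (al (einv e) c) (pnil _ ab)).

Definition redexR (e : gE G) (a : F (eo e)) (c : EG (fst e)) (ab : F (et (einv e)))
  : gpath F (eo e) (et (einv e)) :=
  pcast eq_refl (eq_sym (tinv e))
    (pnil (eo e) (gmul (gmul a (al e c)) (castV (tinv e) ab))).

Inductive gstep : forall u w, gpath F u w -> gpath F u w -> Prop :=
| gstep_intro : forall u w (e : gE G) (p : gpath F u (eo e))
    (q : gpath F (et (einv e)) w) a c ab, cP e c ->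
    gstep u w (pcat p (pcat (redexL e a c ab) q)) (pcat p (pcat (redexR e a c ab) q)).

Definition gsim (Ok : forall u w, gpath F u w -> Prop) (u w : gV G)
  : relation (gpath F u w) :=
  clos_refl_sym_trans _ (fun x y => Ok u w x /\ Ok u w y /\ gstep u w x y).

(* no subsequence  e, omega_e(c), e^{-1}  with cP e c *)
Definition backtrack (e : gE G) {w} (q : gpath F (et e) w) : Prop :=
  match q with
  | pnil _ _ => False
  | pcons e' a _ => exists c, cP e c /\
      existT (fun e0 : gE G => gcar (F (eo e0))) e' a
      = existT (fun e0 : gE G => gcar (F (eo e0))) (einv e) (al (einv e) c)
  end.

Fixpoint reduced {v w} (p : gpath F v w) : Prop :=
  match p with
  | pnil _ _ => True
  | pcons e a q => ~ backtrack e q /\ reduced q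
  end.
End Step.

(* Bass-Serre tree: vertices are paths from v0 (up to ~ and right
   multiplication by S_v), adjacency as in the context. *)
Section Tree.
Context (v0 : gV G) (S : forall v, F v -> Prop)
  (Ok : forall u w, gpath F u w -> Prop) (sim : forall u w, relation (gpath F u w)).

Definition tvert : Type := {v : gV G & gpath F v0 v}.

Definition tapprox (X Y : tvert) : Prop :=
  exists (v : gV G) (x y : gpath F v0 v) (a : F v),
    S v a /\ Ok _ _ x /\ Ok _ _ y /\
    X = existT _ v x /\ Y = existT _ v y /\ sim v0 v x (pcat y (pnil v a)).

Definition tadj0 (X Y : tvert) : Prop :=
  exists (e : gE G) (x : gpath F v0 (eo e)) (a : F (eo e)),
    S (eo e) a /\
    tapprox X (existT _ (eo e) x) /\
    tapprox Y (existT _ (et e) (pcat x (pcons e a (pnil (et e) gone)))).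

Definition tadj (X Y : tvert) : Prop := tadj0 X Y \/ tadj0 Y X.

Definition tbase : tvert := existT _ v0 (pnil v0 gone).

Definition tact (g : gpath F v0 v0) (X : tvert) : tvert :=
  existT _ (projT1 X) (pcat g (projT2 X)).
End Tree.
End PathOps.

Definition apath (A : gog) := gpath (G := ggr A) (Vgrp A).

Definition simA (A : gog) :=
  gsim (EG := fun g => gcar (Egrp A g)) (alpha A) (fun _ _ => True) (fun _ _ _ => True).

Definition tapproxA (A : gog) (v0 : gV (ggr A)) :=
  tapprox v0 (fun _ _ => True) (fun _ _ _ => True) (simA A).

Definition tadjA (A : gog) (v0 : gV (ggr A)) :=
  tadj v0 (fun _ _ => True) (fun _ _ _ => True) (simA A).

(* A-graphs.  The graph morphism [.] is (lv, le) with                  *)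
(* le f = (lg (fst f), lflip (fst f) xor snd f), which commutes with    *)
(* inversion; lo is compatibility with o (hence with t).               *)
Record agraph (A : gog) := AGraph {
  bgr : graph;
  lv : gV bgr -> gV (ggr A);
  lg : gEg bgr -> gEg (ggr A);
  lflip : gEg bgr -> bool;
  lo : forall f : gE bgr,
      lv (eo f) = eo ((lg (fst f), xorb (lflip (fst f)) (snd f)) : gE (ggr A));
  Bsub : forall u, Vgrp A (lv u) -> Prop;
  Bsub1 : forall u, Bsub u gone;
  BsubM : forall u x y, Bsub u x -> Bsub u y -> Bsub u (gmul x y);
  BsubV : forall u x, Bsub u x -> Bsub u (ginv x);
  fal : forall f : gE bgr, Vgrp A (lv (eo f)) }.
Arguments bgr {A} _.
Arguments lv {A} _ _.
Arguments lg {A} _ _.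
Arguments lflip {A} _ _.
Arguments lo {A} _ _.
Arguments Bsub {A} _ _ _.
Arguments fal {A} _ _.

Section AGraph.
Context {A : gog} (B : agraph A).

Definition le (f : gE (bgr B)) : gE (ggr A) :=
  (lg B (fst f), xorb (lflip B (fst f)) (snd f)).

Definition fom (f : gE (bgr B)) : Vgrp A (lv B (et f)) := ginv (fal B (einv f)).

Lemma lt (f : gE (bgr B)) : lv B (et f) = et (le f).
Proof.
  destruct f as [g b].
  pose proof (lo B (g, negb b)) as H.
  unfold et, eo, einv, le in *; simpl in *. rewrite H.
  f_equal. f_equal.
  destruct (lflip B g), b; reflexivity.
Qed.

Definition FB (u : gV (bgr B)) : group := Vgrp A (lv B u).

Definition bpath := gpath (G := bgr B) FB.

Definition alphaB (f : gE (bgr B)) (c : Egrp A (lg B (fst f))) : FB (eo f) :=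
  gmul (gmul (fal B f) (@castV _ (Vgrp A) _ _ (eq_sym (lo B f)) (alpha A (le f) c)))
       (ginv (fal B f)).

(* B_f = alpha_[f]^{-1}(f_a^{-1} B_o(f) f_a) cap omega_[f]^{-1}(f_w B_t(f) f_w^{-1})
   i.e. alpha_f(c) in B_o(f) and omega_f(c) = alpha_{f^{-1}}(c) in B_t(f) *)
Definition Bedge (f : gE (bgr B)) (c : Egrp A (lg B (fst f))) : Prop :=
  Bsub B (eo f) (alphaB f c) /\ Bsub B (et f) (alphaB (einv f) c).

Definition isB {u w} (p : bpath u w) : Prop := allin (Bsub B) p.

Definition simB := gsim (EG := fun g => gcar (Egrp A (lg B g))) alphaB Bedge (fun u w (p : bpath u w) => isB p).

Definition reducedB {u w} (p : bpath u w) : Prop := reduced (EG := fun g => gcar (Egrp A (lg B g))) alphaB Bedge p.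

(* mu(b_0, f_1, ..., f_s, b_s) =
   (b_0 f1_a), [f_1], (f1_w b_1 f2_a), ..., [f_s], (fs_w b_s) *)
Fixpoint mu_aux {u w} (p : bpath u w) : FB u -> apath A (lv B u) (lv B w) :=
  match p in gpath _ u w return FB u -> apath A (lv B u) (lv B w) with
  | pnil u b => fun pre => pnil (lv B u) (gmul pre b)
  | pcons f b q => fun pre =>
      pcast (eq_sym (lo B f)) eq_refl
        (pcons (le f) (@castV _ (Vgrp A) _ _ (lo B f) (gmul (gmul pre b) (fal B f)))
           (pcast (lt f) eq_refl (mu_aux q (fom f))))
  end.

Definition mu {u w} (p : bpath u w) : apath A (lv B u) (lv B w) := mu_aux p gone.

(* \overline{L(B,u0)} as a predicate on closed A-paths at [u0]
   (a union of ~-classes) *)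
Definition Lbar (u0 : gV (bgr B)) (x : apath A (lv B u0) (lv B u0)) : Prop :=
  exists p : bpath u0 u0, isB p /\ reducedB p /\ simA A _ _ (mu p) x.

Definition tapproxB (u0 : gV (bgr B)) :=
  tapprox u0 (Bsub B) (fun u w (p : bpath u w) => isB p) simB.

Definition tadjB (u0 : gV (bgr B)) :=
  tadj u0 (Bsub B) (fun u w (p : bpath u w) => isB p) simB.

Definition phi {u0 : gV (bgr B)} (X : tvert (F := FB) u0) : tvert (F := Vgrp A) (lv B u0) :=
  existT _ (lv B (projT1 X)) (mu (projT2 X)).
End AGraph.

(* Main.v *)
Require Import Defs.
From Stdlib Require Import Relations Bool ProofIrrelevance Classical_Prop.

Lemma inj_pair2' {X : Type} (P : X -> Type) x (a b : P x) :
  existT P x a = existT P x b -> a = b.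
Proof.
  intros H.
  assert (E : forall (s t : sigT P) (h : s = t) (h1 : projT1 s = projT1 t),
    eq_rect _ P (projT2 s) _ h1 = projT2 t).
  { intros s t h h1; subst t. rewrite (proof_irrelevance _ h1 eq_refl). reflexivity. }
  exact (E _ _ H eq_refl).
Qed.

Section Grp.
Context {g : group}.
Lemma gmulA' (x y z : g) : gmul x (gmul y z) = gmul (gmul x y) z. Proof. apply gmulA. Qed.
Lemma gmulgV (x : g) : gmul x (ginv x) = gone.
Proof.
  transitivity (gmul (gmul (ginv (ginv x)) (ginv x)) (gmul x (ginv x))).
  - rewrite gmulVg, gmul1g. reflexivity.
  - rewrite <- gmulA, (gmulA _ (ginv x) x (ginv x)), gmulVg, gmul1g. apply gmulVg.
Qed.
Lemma gmulg1 (x : g) : gmul x gone = x.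
Proof. rewrite <- (gmulVg _ x), gmulA, gmulgV, gmul1g. reflexivity. Qed.
Lemma gmulKV (x y : g) : gmul (ginv x) (gmul x y) = y.
Proof. rewrite gmulA, gmulVg, gmul1g; reflexivity. Qed.
Lemma gmulK (x y : g) : gmul x (gmul (ginv x) y) = y.
Proof. rewrite gmulA, gmulgV, gmul1g; reflexivity. Qed.
Lemma gcancel_l (x y z : g) : gmul x y = gmul x z -> y = z.
Proof. intros H. rewrite <- (gmulKV x y), H, gmulKV. reflexivity. Qed.
Lemma ginv_uniq (x y : g) : gmul x y = gone -> y = ginv x.
Proof. intros H. apply (gcancel_l x). rewrite H, gmulgV. reflexivity. Qed.
Lemma ginvM (x y : g) : ginv (gmul x y) = gmul (ginv y) (ginv x).
Proof. symmetry. apply ginv_uniq. rewrite <- gmulA, (gmulA' y), gmulgV, gmul1g, gmulgV. reflexivity. Qed.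
Lemma ginvK (x : g) : ginv (ginv x) = x.
Proof. symmetry. apply ginv_uniq. apply gmulVg. Qed.
Lemma ginv1 : ginv (gone : g) = gone.
Proof. symmetry; apply ginv_uniq, gmul1g. Qed.
End Grp.

Lemma hom1 {g h : group} (f : g -> h) : (forall x y, f (gmul x y) = gmul (f x) (f y)) -> f gone = gone.
Proof. intros Hf. apply (gcancel_l (f gone)). rewrite <- Hf, !gmulg1. reflexivity. Qed.

Section Paths.
Context {G : graph} {F : gV G -> group}.

Lemma castV_irr {x y : gV G} (H H' : x = y) (a : F x) : castV (F:=F) H a = castV H' a.
Proof. rewrite (proof_irrelevance _ H H'); reflexivity. Qed.
Lemma castV_refl {x : gV G} (H : x = x) (a : F x) : castV (F:=F) H a = a.
Proof. rewrite (proof_irrelevance _ H eq_refl); reflexivity. Qed.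
Lemma castV_trans {x y z : gV G} (H1 : x = y) (H2 : y = z) (a : F x) :
  castV (F:=F) H2 (castV H1 a) = castV (eq_trans H1 H2) a.
Proof. destruct H2, H1; reflexivity. Qed.
Lemma castV_mul {x y : gV G} (H : x = y) (a b : F x) :
  castV (F:=F) H (gmul a b) = gmul (castV H a) (castV H b).
Proof. destruct H; reflexivity. Qed.
Lemma castV_inv {x y : gV G} (H : x = y) (a : F x) :
  castV (F:=F) H (ginv a) = ginv (castV H a).
Proof. destruct H; reflexivity. Qed.
Lemma castV_one {x y : gV G} (H : x = y) : castV (F:=F) H gone = gone.
Proof. destruct H; reflexivity. Qed.

Lemma pcast_irr {u u' w w'} (H1 H1' : u = u') (H2 H2' : w = w') (p : gpath F u w) :
  pcast H1 H2 p = pcast H1' H2' p.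
Proof. rewrite (proof_irrelevance _ H1 H1'), (proof_irrelevance _ H2 H2'); reflexivity. Qed.
Lemma pcast_refl {u w} (H1 : u = u) (H2 : w = w) (p : gpath F u w) : pcast H1 H2 p = p.
Proof. rewrite (proof_irrelevance _ H1 eq_refl), (proof_irrelevance _ H2 eq_refl); reflexivity. Qed.
Lemma pcast_trans {u u' u'' w w' w''} (H1 : u = u') (H2 : w = w') (H1' : u' = u'') (H2' : w' = w'')
  (p : gpath F u w) :
  pcast H1' H2' (pcast H1 H2 p) = pcast (eq_trans H1 H1') (eq_trans H2 H2') p.
Proof. destruct H1', H2', H1, H2; reflexivity. Qed.
Lemma pcast_split {u u' w w'} (H1 : u = u') (H2 : w = w') (p : gpath F u w) :
  pcast H1 H2 p = pcast H1 eq_refl (pcast eq_refl H2 p).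
Proof. destruct H1, H2; reflexivity. Qed.
Lemma lmul_pcast {u u' w w'} (H1 : u = u') (H2 : w = w') (p : gpath F u w) x :
  lmul (pcast H1 H2 p) x = pcast H1 H2 (lmul p (castV (eq_sym H1) x)).
Proof. destruct H1, H2; reflexivity. Qed.
Lemma pcat_pcast_l {u u' v w} (H : u = u') (p : gpath F u v) (q : gpath F v w) :
  pcat (pcast H eq_refl p) q = pcast H eq_refl (pcat p q).
Proof. destruct H; reflexivity. Qed.
Lemma pcat_pcast_mid {u v v' w} (H : v = v') (p : gpath F u v) (q : gpath F v' w) :
  pcat (pcast eq_refl H p) q = pcat p (pcast (eq_sym H) eq_refl q).
Proof. destruct H; reflexivity. Qed.
Lemma pcat_pcast_r {u v w w'} (H : w = w') (p : gpath F u v) (q : gpath F v w) :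
  pcat p (pcast eq_refl H q) = pcast eq_refl H (pcat p q).
Proof. destruct H; reflexivity. Qed.
Lemma pcons_pcast (e : gE G) {w w'} (H : w = w') a (q : gpath F (et e) w) :
  pcons e a (pcast eq_refl H q) = pcast eq_refl H (pcons e a q).
Proof. destruct H; reflexivity. Qed.
Lemma pnil_pcast {x y} (H : x = y) (a : F x) :
  pcast H eq_refl (pnil x a) = pcast eq_refl (eq_sym H) (pnil y (castV H a)).
Proof. destruct H; reflexivity. Qed.
Lemma existT_pcast {v0 x y} (H : x = y) (p : gpath F v0 x) :
  existT (fun v => gpath F v0 v) x p = existT _ y (pcast eq_refl H p).
Proof. destruct H; reflexivity. Qed.

Lemma lmul_lmul {u w} (p : gpath F u w) x y : lmul (lmul p x) y = lmul p (gmul y x).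
Proof. destruct p; simpl; rewrite gmulA; reflexivity. Qed.
Lemma lmul_1 {u w} (p : gpath F u w) : lmul p gone = p.
Proof. destruct p; simpl; rewrite gmul1g; reflexivity. Qed.
Lemma pcat_lmul {u v w} (p : gpath F u v) (q : gpath F v w) x :
  pcat (lmul p x) q = lmul (pcat p q) x.
Proof. destruct p; simpl; [rewrite lmul_lmul|]; reflexivity. Qed.
Lemma pcatA {u v w z} (p : gpath F u v) (q : gpath F v w) (r : gpath F w z) :
  pcat (pcat p q) r = pcat p (pcat q r).
Proof. induction p; simpl; [apply pcat_lmul| rewrite IHp; reflexivity]. Qed.
Lemma pcat_p1 {u w} (p : gpath F u w) : pcat p (pnil w gone) = p.
Proof. induction p; simpl; [rewrite gmulg1| rewrite IHp]; reflexivity. Qed.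
Lemma pcat_1p {u w} (p : gpath F u w) : pcat (pnil u gone) p = p.
Proof. apply lmul_1. Qed.

Section Alls.
Variable S : forall v, F v -> Prop.
Hypothesis S1 : forall v, S v gone.
Hypothesis SM : forall v x y, S v x -> S v y -> S v (gmul x y).
Hypothesis SV : forall v x, S v x -> S v (ginv x).
Hypothesis SC : forall x y (H : x = y) a, S x a -> S y (castV H a).

Lemma allin_lmul {u w} (p : gpath F u w) x : S u x -> allin S p -> allin S (lmul p x).
Proof. destruct p; simpl; intuition. Qed.
Lemma allin_lmul_inv {u w} (p : gpath F u w) x : allin S (lmul p x) -> S u (ginv x) -> allin S p.
Proof.
  intros H Hx. rewrite <- (lmul_1 p), <- (gmulVg _ x), <- lmul_lmul.
  apply allin_lmul; auto.
Qed.
Lemma allin_pcat {u v w} (p : gpath F u v) (q : gpath F v w) :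
  allin S p -> allin S q -> allin S (pcat p q).
Proof. induction p; simpl; intuition. apply allin_lmul; auto. Qed.
Lemma allin_pcast {u u' w w'} (H1 : u = u') (H2 : w = w') (p : gpath F u w) :
  allin S p -> allin S (pcast H1 H2 p).
Proof. destruct H1, H2; auto. Qed.
Lemma allin_prev {u w} (p : gpath F u w) : allin S p -> allin S (prev p).
Proof.
  induction p; simpl; intros.
  - auto.
  - destruct H. apply allin_pcat; auto. apply allin_pcast. simpl. split; auto.
Qed.
End Alls.
End Paths.

Section Sim.
Context {G : graph} {F : gV G -> group}.
Context {EG : gEg G -> Type} (al : forall e : gE G, EG (fst e) -> F (eo e))
  (cP : forall e : gE G, EG (fst e) -> Prop).
Variable S : forall v, F v -> Prop.
Hypothesis S1 : forall v, S v gone.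
Hypothesis SM : forall v x y, S v x -> S v y -> S v (gmul x y).
Hypothesis SV : forall v x, S v x -> S v (ginv x).
Hypothesis SC : forall x y (H : x = y) a, S x a -> S y (castV H a).

Definition Ok := fun u w (p : gpath F u w) => allin S p.
Definition sim := gsim al cP Ok.

Lemma sim_refl {u w} (p : gpath F u w) : sim u w p p.
Proof. apply rst_refl. Qed.
Lemma sim_sym {u w} (p q : gpath F u w) : sim u w p q -> sim u w q p.
Proof. apply rst_sym. Qed.
Lemma sim_trans {u w} (p q r : gpath F u w) : sim u w p q -> sim u w q r -> sim u w p r.
Proof. apply rst_trans. Qed.
Lemma sim_step {u w} (p q : gpath F u w) : allin S p -> allin S q -> gstep al cP u w p q -> sim u w p q.
Proof. intros; apply rst_step; unfold Ok; auto. Qed.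

Lemma sim_cong_l {u v w} (z : gpath F u v) (x y : gpath F v w) :
  allin S z -> sim v w x y -> sim u w (pcat z x) (pcat z y).
Proof.
  intros Hz H. induction H as [x y [Hx [Hy Hs]]| | |].
  - apply sim_step; try (apply allin_pcat; auto).
    destruct Hs. rewrite <- !(pcatA z p). constructor; auto.
  - apply sim_refl.
  - apply sim_sym; auto.
  - eapply sim_trans; eauto.
Qed.

Lemma sim_cong_r {u v w} (z : gpath F v w) (x y : gpath F u v) :
  allin S z -> sim u v x y -> sim u w (pcat x z) (pcat y z).
Proof.
  intros Hz H. induction H as [x y [Hx [Hy Hs]]| | |].
  - apply sim_step; try (apply allin_pcat; auto).
    destruct Hs. rewrite !pcatA. constructor; auto.
  - apply sim_refl.
  - apply sim_sym; auto.
  - eapply sim_trans; eauto.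
Qed.

Lemma sim_eq {u w} (p q : gpath F u w) : p = q -> sim u w p q.
Proof. intros ->; apply sim_refl. Qed.

Variable c1 : forall g, EG g.
Hypothesis cP1 : forall e, cP e (c1 (fst e)).
Hypothesis al1 : forall e, al e (c1 (fst e)) = gone.

Lemma al1' g b : al (g,b) (c1 g) = gone. Proof. exact (al1 (g,b)). Qed.
Lemma cP1' g b : cP (g,b) (c1 g). Proof. exact (cP1 (g,b)). Qed.

Lemma step_eq {u w} (x y x' y' : gpath F u w) : x = x' -> y = y' -> gstep al cP u w x' y' -> gstep al cP u w x y.
Proof. intros -> ->; auto. Qed.

Lemma sim_linv_step (e : gE G) {w} a (q : gpath F (et e) w) :
  S _ a -> allin S q ->
  sim _ _ (pcat (pcast (eq_refl : eo (einv e) = et e) (tinv e)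
           (pcons (einv e) gone (pnil _ (castV (eq_sym (tinv e)) (ginv a))))) (pcons e a q)) q.
Proof.
  intros Ha Hq.
  destruct e as [g b]; destruct b;
  (rewrite pcast_refl, castV_refl; simpl;
  apply sim_trans with (pcat (pnil _ gone) (pcat (redexR al (einv (g,_)) gone (c1 g) gone) q));
  [ apply sim_step; [ | | eapply step_eq;
      [ | reflexivity | constructor; exact (cP1' _ _)] ]
  | ]).
  all: repeat match goal with |- context [al ?e (c1 ?g)] =>
        replace (al e (c1 g)) with (@gone (F (eo e))) by (symmetry; exact (al1 e)) end.
  all: unfold redexR; repeat rewrite lmul_1; repeat rewrite pcat_pcast_mid;
       repeat rewrite pcast_refl; simpl; repeat rewrite castV_one;
       repeat rewrite gmulVg; repeat rewrite gmul1g; repeat rewrite lmul_1;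
       try apply sim_refl; try reflexivity; auto.
  all: match goal with |- context [al ?e (c1 ?g)] =>
        replace (al e (c1 g)) with (@gone (F (eo e))) by (symmetry; exact (al1 e)) end.
  all: rewrite ?gmul1g, ?lmul_1; auto; try reflexivity; apply sim_refl.
Qed.

Lemma sim_linv {u w} (p : gpath F u w) : allin S p -> sim _ _ (pcat (prev p) p) (pnil _ gone).
Proof.
  induction p as [v a|e w a q IH]; simpl; intros Hp.
  - rewrite gmulVg. apply sim_refl.
  - destruct Hp as [Ha Hq]. rewrite pcatA.
    eapply sim_trans; [apply sim_cong_l; [apply allin_prev; auto; apply SC| apply sim_linv_step; auto] | ].
    auto.
Qed.

Lemma sim_rinv {u w} (p : gpath F u w) : allin S p -> sim _ _ (pcat p (prev p)) (pnil _ gone).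
Proof.
  intros Hp.
  assert (Hz : allin S (prev p)) by (apply allin_prev; auto; apply SC).
  assert (Hz' : allin S (prev (prev p))) by (apply allin_prev; auto; apply SC).
  rewrite <- (pcat_1p (pcat p (prev p))).
  eapply sim_trans.
  { apply sim_cong_r. { apply allin_pcat; auto. } apply sim_sym, (sim_linv (prev p)); auto. }
  rewrite pcatA, <- (pcatA (prev p) p).
  eapply sim_trans.
  { apply sim_cong_l; auto. apply sim_cong_r; auto. apply sim_linv; auto. }
  rewrite pcat_1p. apply sim_linv; auto.
Qed.
End Sim.

Section Red.
Context {G : graph} {F : gV G -> group}.
Context {EG : gEg G -> Type} (al : forall e : gE G, EG (fst e) -> F (eo e))
  (cP : forall e : gE G, EG (fst e) -> Prop).
Variable S : forall v, F v -> Prop.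
Hypothesis S1 : forall v, S v gone.
Hypothesis SM : forall v x y, S v x -> S v y -> S v (gmul x y).
Hypothesis SV : forall v x, S v x -> S v (ginv x).
Hypothesis SC : forall x y (H : x = y) a, S x a -> S y (castV H a).
Hypothesis HcP : forall e c, cP e c -> S (eo e) (al e c).

Definition btP (P : forall e' : gE G, F (eo e') -> Prop) {v w} (q : gpath F v w) : Prop :=
  match q with pnil _ _ => False | pcons e' a _ => P e' a end.

Lemma bt_inv {v w} (q : gpath F v w) P : btP P q ->
  exists e' a' (q'' : gpath F (et e') w) (H : eo e' = v), P e' a' /\ q = pcast H eq_refl (pcons e' a' q'').
Proof. destruct q; simpl; [tauto|]. intros Hp. exists e, g, q, eq_refl. auto. Qed.

Lemma reduced_lmul {u w} (p : gpath F u w) x : reduced al cP p -> reduced al cP (lmul p x).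
Proof. destruct p; simpl; auto. Qed.
Lemma reduced_pcast {u u' w w'} (H1 : u = u') (H2 : w = w') (p : gpath F u w) :
  reduced al cP p -> reduced al cP (pcast H1 H2 p).
Proof. destruct H1, H2; auto. Qed.

Lemma reduce_ex {u w} (p : gpath F u w) : allin S p ->
  exists p', allin S p' /\ reduced al cP p' /\ sim al cP S u w p p'.
Proof.
  induction p as [v a|e w a q IH]; intros Hp.
  - exists (pnil v a). simpl. split; auto. split; auto. apply sim_refl.
  - destruct Hp as [Ha Hq]. destruct (IH Hq) as [q' [Hq' [Rq' Sq']]].
    assert (S1' : sim al cP S _ _ (pcons e a q) (pcons e a q')).
    { rewrite <- (lmul_1 q), <- (lmul_1 q').
      change (sim al cP S (eo e) w (pcat (pcons e a (pnil _ gone)) q) (pcat (pcons e a (pnil _ gone)) q')).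
      apply sim_cong_l; simpl; auto. }
    destruct (classic (backtrack al cP e q')) as [Hbt|Hnbt].
    2:{ exists (pcons e a q'). simpl. auto. }
    change (btP (fun e' a' => exists c, cP e c /\
      existT (fun e0 : gE G => gcar (F (eo e0))) e' a'
      = existT (fun e0 : gE G => gcar (F (eo e0))) (einv e) (al (einv e) c)) q') in Hbt.
    destruct (bt_inv q' _ Hbt) as [e' [a' [q'' [H [[c [Hc Heq]] Hqe]]]]].
    assert (E := f_equal (@projT1 _ _) Heq); simpl in E; subst e'.
    apply inj_pair2' in Heq. subst a'.
    rewrite pcast_refl in Hqe. subst q'.
    destruct Hq' as [Hal Hq''].
    destruct Rq' as [_ Rq''].
    exists (pcat (pnil _ gone) (pcat (redexR al e a c gone) q'')).
    split; [|split].
    + apply allin_pcat; simpl; auto. apply allin_pcat; auto. unfold redexR.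
      apply allin_pcast; simpl. auto.
    + unfold redexR. rewrite pcat_pcast_mid. apply (reduced_lmul (pcat _ _)). apply (reduced_lmul (pcast _ _ _)). apply reduced_pcast; auto.
    + eapply sim_trans; [exact S1'|]. apply sim_step.
      * simpl; auto.
      * apply allin_pcat; simpl; auto. apply allin_pcat; auto. unfold redexR.
        apply allin_pcast; simpl. auto.
      * eapply step_eq; [ | reflexivity | constructor; exact Hc].
        simpl. rewrite lmul_1, gmul1g. reflexivity.
Qed.
End Red.

Arguments pcast : simpl never.
Arguments castV : simpl never.
Section Mu.
Context {A : gog} (B : agraph A).

Lemma castFB {x y : gV (bgr B)} (H : x = y) (a : FB B x) :
  castV (F:=FB B) H a = castV (F:=Vgrp A) (f_equal (lv B) H) a.
Proof. destruct H; reflexivity. Qed.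

Lemma mu_aux_mul {u w} (p : bpath B u w) x y : mu_aux B p (gmul x y) = lmul (mu_aux B p y) x.
Proof.
  destruct p; simpl.
  - rewrite !gmulA. reflexivity.
  - rewrite lmul_pcast. simpl. rewrite (castV_irr (eq_sym (eq_sym _)) (lo B e)), <- castV_mul, !gmulA. reflexivity.
Qed.

Lemma mu_aux_lmul {u w} (p : bpath B u w) b pre : mu_aux B (lmul p b) pre = mu_aux B p (gmul pre b).
Proof. destruct p; simpl; rewrite ?gmulA; reflexivity. Qed.

Lemma mu_pcat {u v w} (p : bpath B u v) (r : bpath B v w) pre :
  mu_aux B (pcat p r) pre = pcat (mu_aux B p pre) (mu B r).
Proof.
  revert pre; induction p as [v b|f w0 b q IH]; intros pre; simpl.
  - rewrite mu_aux_lmul. unfold mu. rewrite <- (gmulg1 (gmul pre b)) at 1.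
    apply mu_aux_mul.
  - rewrite pcat_pcast_l. simpl. rewrite pcat_pcast_l, IH. reflexivity.
Qed.

Lemma mu_pcast {u u' w w'} (H1 : u = u') (H2 : w = w') (p : bpath B u w) pre :
  mu_aux B (pcast H1 H2 p) pre = pcast (f_equal (lv B) H1) (f_equal (lv B) H2) (mu_aux B p (castV (F:=FB B) (eq_sym H1) pre)).
Proof. destruct H1, H2; reflexivity. Qed.
End Mu.

Arguments pcast : simpl never.
Arguments castV : simpl never.

Lemma edge_transport {A : gog} (g0 : gEg (ggr A)) (x y : bool) (Eb : x = y) {w}
  (a : Vgrp A (eo (g0,x))) (q : apath A (et (g0,x)) w) :
  pcons (g0,x) a q = pcast (f_equal (fun z => eo ((g0,z) : gE (ggr A))) (eq_sym Eb)) eq_refl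
    (pcons (g0,y) (castV (F:=Vgrp A) (f_equal (fun z => eo ((g0,z) : gE (ggr A))) Eb) a)
       (pcast (f_equal (fun z => et ((g0,z) : gE (ggr A))) Eb) eq_refl q)).
Proof. destruct Eb; reflexivity. Qed.

Lemma alpha_transport {A : gog} (g0 : gEg (ggr A)) (x y : bool) (Eb : x = y) H c :
  castV (F:=Vgrp A) H (alpha A (g0,x) c) = alpha A (g0,y) c.
Proof. destruct Eb. apply castV_refl. Qed.

Lemma pcast_r1 {G : graph} {F : gV G -> group} {u u' w} (H1 : u = u') (H2 : w = w) (p : gpath F u w) :
  pcast H1 H2 p = pcast H1 eq_refl p.
Proof. rewrite (proof_irrelevance _ H2 eq_refl). reflexivity. Qed.

Lemma pcons2_eq {G : graph} {F : gV G -> group} (e : gE G) {u v} (H1 : eo e = u)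
  (H2 : et (einv e) = v) a b b' r :
  b = b' -> pcast (F:=F) H1 H2 (pcons e a (pcons (einv e) b (pnil _ r))) =
            pcast H1 H2 (pcons e a (pcons (einv e) b' (pnil _ r))).
Proof. intros ->; reflexivity. Qed.

Lemma pnil_pcast2 {G : graph} {F : gV G -> group} {x y y2} (H1 : x = y) (H2 : x = y2) (a : F x) :
  pcast H1 H2 (pnil x a) = pcast eq_refl (eq_trans (eq_sym H1) H2) (pnil y (castV H1 a)).
Proof. destruct H1, H2; reflexivity. Qed.
Lemma pnil_cast_eq {G : graph} {F : gV G -> group} {x y} (K K' : x = y) (a a' : F x) :
  a = a' -> pcast eq_refl K (pnil x a) = pcast eq_refl K' (pnil x a').
Proof. intros ->. apply pcast_irr. Qed.

Ltac unify_casts := repeat match goal with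
 | |- context [@castV ?G ?F ?x ?y ?H1 ?a] =>
    match goal with |- context [@castV G F ?x2 ?y2 ?H2 a] =>
      assert_fails constr_eq H1 H2; rewrite (castV_irr H2 H1) end end.

Section K.
Context {A : gog} (B : agraph A).

Lemma Eb_lemma (g : gEg (bgr B)) b : xorb (lflip B g) (negb b) = negb (xorb (lflip B g) b).
Proof. destruct (lflip B g), b; reflexivity. Qed.

Lemma mu_redex (f : gE (bgr B)) a (c : Egrp A (lg B (fst f))) ab :
  exists (H1 : eo (le B f) = lv B (eo f)) (H2 : et (einv (le B f)) = lv B (et (einv f))) a' ab',
   mu B (redexL (EG := fun g => gcar (Egrp A (lg B g))) (alphaB B) f a c ab) = pcast H1 H2 (redexL (EG := fun g => gcar (Egrp A g)) (alpha A) (le B f) a' c ab') /\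
   mu B (redexR (EG := fun g => gcar (Egrp A (lg B g))) (alphaB B) f a c ab) = pcast H1 H2 (redexR (EG := fun g => gcar (Egrp A g)) (alpha A) (le B f) a' c ab').
Proof.
  destruct f as [g b].
  do 4 eexists. split.
  - unfold mu, redexL. simpl.
    rewrite pcast_trans.
    change (le B (einv (g,b))) with ((lg B g, xorb (lflip B g) (negb b)) : gE (ggr A)).
    rewrite (edge_transport (lg B g) _ _ (Eb_lemma g b)).
    rewrite pcast_trans, pcast_refl, pcast_trans, (pcast_r1 _ (eq_trans eq_refl eq_refl)), pnil_pcast, (pcons_pcast (G:=ggr A) (lg B g, negb (xorb (lflip B g) b))), (pcons_pcast (G:=ggr A) (le B (g,b))), pcast_trans.
    assert (Hb : castV (F:=Vgrp A) (f_equal (fun z : bool => eo ((lg B g, z) : gE (ggr A))) (Eb_lemma g b))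
                   (castV (lo B (einv (g, b)))
                      (gmul (gmul (fom B (g, b)) (alphaB B (einv (g, b)) c))
                         (fal B (einv (g, b))))) = alpha A (einv (le B (g, b))) c).
    { unfold fom, alphaB. rewrite <- !gmulA, gmulKV, gmulVg, gmulg1.
      rewrite !castV_trans. apply (alpha_transport (lg B g) _ _ (Eb_lemma g b)). }
    eapply eq_trans; [apply (pcons2_eq _ _ _ _ _ _ _ Hb) | reflexivity].
  - destruct b; unfold mu, redexR; rewrite mu_pcast; simpl; rewrite !pcast_trans, pnil_pcast2; symmetry; rewrite pnil_pcast2; symmetry;
    apply pnil_cast_eq; unfold alphaB, fom; rewrite !castFB;
    rewrite ?castV_mul, ?castV_inv, ?castV_trans, ?castV_mul, ?castV_inv, ?castV_trans.
    all: rewrite ?castV_mul, ?castV_inv, ?castV_one; rewrite ?castV_refl; unify_casts.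
    all: rewrite !gmul1g, <- !gmulA; reflexivity.
Qed.
End K.

Arguments pcast : simpl never.
Arguments castV : simpl never.

Lemma allin_True {G : graph} {F : gV G -> group} {u w} (p : gpath F u w) : allin (fun _ _ => True) p.
Proof. induction p; simpl; auto. Qed.

Lemma simA_iff (A : gog) u w (x y : apath A u w) :
  simA A u w x y <-> sim (EG := fun g => gcar (Egrp A g)) (alpha A) (fun _ _ => True) (fun _ _ => True) u w x y.
Proof.
  split; intros H; induction H.
  - apply rst_step. destruct H as [_ [_ H]]. unfold Ok. repeat split; auto using allin_True.
  - apply rst_refl.
  - apply rst_sym; auto.
  - eapply rst_trans; eauto.
  - apply rst_step. destruct H as [_ [_ H]]. repeat split; auto.
  - apply rst_refl.
  - apply rst_sym; auto.
  - eapply rst_trans; eauto.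
Qed.

Lemma pcat_pcast_redex {G : graph} {F : gV G -> group} {u x x' y y' w} (H1 : x = x') (H2 : y = y')
  (P : gpath F u x') (R : gpath F x y) (Q : gpath F y' w) :
  pcat P (pcat (pcast H1 H2 R) Q) = pcat (pcast eq_refl (eq_sym H1) P) (pcat R (pcast (eq_sym H2) eq_refl Q)).
Proof. destruct H1, H2; reflexivity. Qed.

Section T1.
Context {A : gog} (B : agraph A).

Lemma mu_gstep {u w} (x y : bpath B u w) :
  gstep (EG := fun g => gcar (Egrp A (lg B g))) (alphaB B) (Bedge B) u w x y ->
  simA A _ _ (mu B x) (mu B y).
Proof.
  intros Hs. destruct Hs as [u w f p q a c ab Hc].
  unfold mu. rewrite !mu_pcat.
  destruct (mu_redex B f a c ab) as [H1 [H2 [a' [ab' [E1 E2]]]]].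
  unfold mu in E1, E2 |- *. rewrite !mu_pcat. unfold mu.
  rewrite E1, E2, !pcat_pcast_redex.
  apply rst_step. split; [exact I| split; [exact I|]].
  constructor. exact I.
Qed.

Lemma part1 (u w : gV (bgr B)) (p p' : bpath B u w) :
  isB B p -> isB B p' -> simB B u w p p' -> simA A (lv B u) (lv B w) (mu B p) (mu B p').
Proof.
  intros _ _ H. induction H as [x y [_ [_ Hs]]| | |].
  - apply mu_gstep; auto.
  - apply rst_refl.
  - apply rst_sym; auto.
  - eapply rst_trans; eauto.
Qed.
End T1.

Arguments pcast : simpl never.
Arguments castV : simpl never.

Section T2.
Context {A : gog} (B : agraph A).

Lemma alpha1 (e : gE (ggr A)) : alpha A e gone = gone.
Proof. apply hom1. intros; apply alpha_mul. Qed.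

Lemma alphaB1 (e : gE (bgr B)) : alphaB B e gone = gone.
Proof. unfold alphaB. rewrite alpha1, castV_one, gmulg1, gmulgV. reflexivity. Qed.

Lemma BsubC : forall x y (H : x = y) (a : FB B x), Bsub B x a -> Bsub B y (castV (F:=FB B) H a).
Proof. intros x y H a Ha; destruct H; exact Ha. Qed.

Definition simA' := sim (EG := fun g => gcar (Egrp A g)) (alpha A) (fun _ _ => True) (fun _ _ => True).

Lemma part2 {u v w} (p : bpath B u v) (q : bpath B v w) : simA A _ _ (mu B (pcat p q)) (pcat (mu B p) (mu B q)).
Proof. unfold mu at 1. rewrite mu_pcat. apply rst_refl. Qed.

Lemma part3 (u0 : gV (bgr B)) (x : apath A (lv B u0) (lv B u0)) :
  Lbar B u0 x <-> exists p : bpath B u0 u0, isB B p /\ simA A _ _ (mu B p) x.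
Proof.
  split.
  - intros [p [Hp [_ Hs]]]. eauto.
  - intros [p [Hp Hs]].
    destruct (reduce_ex (EG := fun g => gcar (Egrp A (lg B g))) (alphaB B) (Bedge B) (Bsub B)
       (Bsub1 _ B) (BsubM _ B) BsubC (fun e c H => proj1 H) p Hp) as [p' [Hp' [Rp' Sp']]].
    exists p'. split; [exact Hp'|]. split; [exact Rp'|].
    eapply rst_trans; [|exact Hs]. apply rst_sym. apply part1; auto.
Qed.

Lemma simA_cong_l {u v w} (z : apath A u v) (x y : apath A v w) :
  simA A _ _ x y -> simA A _ _ (pcat z x) (pcat z y).
Proof. rewrite !simA_iff. apply sim_cong_l; auto using allin_True. Qed.
Lemma simA_cong_r {u v w} (z : apath A v w) (x y : apath A u v) :
  simA A _ _ x y -> simA A _ _ (pcat x z) (pcat y z).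
Proof. rewrite !simA_iff. apply sim_cong_r; auto using allin_True. Qed.
Lemma simA_rinv {u w} (x : apath A u w) : simA A _ _ (pcat x (prev x)) (pnil _ gone).
Proof.
  apply simA_iff. exact (sim_rinv (EG := fun g => gcar (Egrp A g)) (alpha A) (fun _ _ => True) (fun _ _ => True)
    (fun _ => I) (fun _ _ _ _ _ => I) (fun _ _ _ => I) (fun _ _ _ _ _ => I) (fun g => gone) (fun _ => I) alpha1 x (allin_True x)).
Qed.

Lemma simB_linv {u w} (p : bpath B u w) : isB B p -> simB B _ _ (pcat (prev p) p) (pnil _ gone).
Proof.
  intros Hp.
  refine (sim_linv (EG := fun g => gcar (Egrp A (lg B g))) (alphaB B) (Bedge B) (Bsub B)
     (Bsub1 _ B) (BsubM _ B) (BsubV _ B) BsubC (fun _ => gone) _ alphaB1 p Hp).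
  intros e. unfold Bedge. split; [exact (eq_ind_r (fun z => Bsub B _ z) (Bsub1 _ B _) (alphaB1 e)) | exact (eq_ind_r (fun z => Bsub B _ z) (Bsub1 _ B _) (alphaB1 (einv e)))].
Qed.

Lemma subgroup (u0 : gV (bgr B)) :
  Lbar B u0 (pnil (lv B u0) gone)
  /\ (forall x y, Lbar B u0 x -> Lbar B u0 y -> Lbar B u0 (pcat x y))
  /\ (forall x, Lbar B u0 x -> Lbar B u0 (prev x)).
Proof.
  split; [|split].
  - apply part3. exists (pnil u0 gone). split; [apply Bsub1|].
    unfold mu. simpl. rewrite gmul1g. apply rst_refl.
  - intros x y Hx Hy. apply part3 in Hx, Hy. apply part3.
    destruct Hx as [p [Hp Hpx]], Hy as [q [Hq Hqy]].
    exists (pcat p q). split.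
    + apply (allin_pcat (Bsub B) (BsubM _ B)); auto.
    + eapply rst_trans; [apply part2|].
      eapply rst_trans; [apply simA_cong_r; exact Hpx|]. apply simA_cong_l; exact Hqy.
  - intros x Hx. apply part3 in Hx. apply part3.
    destruct Hx as [p [Hp Hpx]].
    assert (Hpp : isB B (prev p)) by (apply (allin_prev (Bsub B) (Bsub1 _ B) (BsubM _ B) (BsubV _ B) BsubC); auto).
    exists (prev p). split; [exact Hpp|].
    assert (Ha : simA A _ _ (pcat (mu B (prev p)) (mu B p)) (pnil _ gone)).
    { eapply rst_trans; [apply rst_sym, part2|].
      eapply rst_trans; [apply (part1 B _ _ _ (pnil u0 gone)); [apply (allin_pcat (Bsub B) (BsubM _ B)); auto | apply Bsub1 | apply simB_linv; auto]|].
      unfold mu. simpl. rewrite gmul1g. apply rst_refl. }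
    rewrite <- (pcat_p1 (mu B (prev p))).
    eapply rst_trans; [apply simA_cong_l, rst_sym, (simA_rinv x)|].
    rewrite <- pcatA.
    eapply rst_trans; [apply simA_cong_r, simA_cong_l, rst_sym; exact Hpx|].
    eapply rst_trans; [apply simA_cong_r; exact Ha|].
    rewrite pcat_1p. apply rst_refl.
Qed.
End T2.

Arguments pcast : simpl never.
Arguments castV : simpl never.

Section T3.
Context {A : gog} (B : agraph A) (u0 : gV (bgr B)).

Lemma part4a X Y : tapproxB B u0 X Y -> tapproxA A (lv B u0) (phi B X) (phi B Y).
Proof.
  intros [v [x [y [a [Ha [Hx [Hy [-> [-> Hs]]]]]]]]].
  unfold phi; simpl. exists (lv B v), (mu B x), (mu B y), a.
  repeat split.
  eapply rst_trans; [apply (part1 B _ _ x (pcat y (pnil v a))); auto; apply (allin_pcat (Bsub B) (BsubM _ B)); simpl; auto|].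
  eapply rst_trans; [apply part2|]. unfold mu at 2. simpl. rewrite gmul1g. apply rst_refl.
Qed.

Lemma part4c : tapproxA A (lv B u0) (phi B (tbase u0)) (tbase (lv B u0)).
Proof.
  unfold phi, tbase; simpl. exists (lv B u0), (pnil _ (gmul gone gone)), (pnil _ gone), gone.
  repeat split. apply rst_refl.
Qed.

Lemma part4d (g : bpath B u0 u0) (X : tvert (F := FB B) u0) :
  tapproxA A (lv B u0) (phi B (tact u0 g X)) (tact (lv B u0) (mu B g) (phi B X)).
Proof.
  destruct X as [v x]. unfold phi, tact; simpl.
  exists (lv B v), (mu B (pcat g x)), (pcat (mu B g) (mu B x)), gone.
  repeat split. rewrite pcat_p1. apply part2.
Qed.

Lemma tapA_trans P v (q r : apath A (lv B u0) v) b :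
  tapproxA A (lv B u0) P (existT _ v q) -> simA A _ _ q (pcat r (pnil v b)) ->
  tapproxA A (lv B u0) P (existT _ v r).
Proof.
  intros [v' [x [y [a [_ [_ [_ [-> [Ey Hs]]]]]]]]] Hq.
  assert (E := f_equal (@projT1 _ _) Ey); simpl in E; subst v'.
  apply inj_pair2' in Ey. subst y.
  exists v, x, r, (gmul b a). repeat split.
  eapply rst_trans; [exact Hs|].
  eapply rst_trans; [apply simA_cong_r; exact Hq|]. rewrite pcatA. apply rst_refl.
Qed.

Lemma tapA_cast P x y (H : x = y) (p : apath A (lv B u0) x) :
  tapproxA A (lv B u0) P (existT _ x p) -> tapproxA A (lv B u0) P (existT _ y (pcast eq_refl H p)).
Proof. destruct H; auto. Qed.
Lemma tapA_uncast P x y (H : x = y) (p : apath A (lv B u0) x) :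
  tapproxA A (lv B u0) P (existT _ y (pcast eq_refl H p)) -> tapproxA A (lv B u0) P (existT _ x p).
Proof. destruct H; auto. Qed.

Lemma part4b0 X Y : tadj0 u0 (Bsub B) (fun u w (p : bpath B u w) => isB B p) (simB B) X Y ->
  tadj0 (lv B u0) (fun _ _ => True) (fun _ _ _ => True) (simA A) (phi B X) (phi B Y).
Proof.
  intros [e [x [a [Ha [H1 H2]]]]].
  exists (le B e), (pcast eq_refl (lo B e) (mu B x)), (castV (lo B e) (gmul a (fal B e))).
  split; [exact I|split].
  - apply part4a in H1. unfold phi at 2 in H1; simpl in H1.
    apply tapA_cast; exact H1.
  - apply part4a in H2. unfold phi at 2 in H2; simpl in H2.
    apply (tapA_uncast _ _ _ (eq_sym (lt B e))).
    eapply tapA_trans; [exact H2|]. instantiate (1 := fom B e).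
    match goal with |- simA _ _ _ ?L ?R => replace L with R; [apply rst_refl|] end.
    rewrite pcat_pcast_mid, pcatA, pcat_pcast_mid.
    transitivity (pcat (mu B x) (mu B (pcons e a (pnil _ gone)))); [| symmetry; apply mu_pcat].
    f_equal. unfold mu; simpl.
    rewrite lmul_1, gmul1g, gmulg1, (pcast_irr (eq_sym (eq_sym (lt B e))) (lt B e) eq_refl eq_refl).
    reflexivity.
Qed.

Lemma part4b X Y : tadjB B u0 X Y -> tadjA A (lv B u0) (phi B X) (phi B Y).
Proof. intros [H|H]; [left|right]; apply part4b0; exact H. Qed.
End T3.

Theorem mainTheorem4 (A : gog) (B : agraph A) (u0 : gV (bgr B)) :
  (* (1) mu respects ~ on B-paths *)
  (forall (u w : gV (bgr B)) (p p' : bpath B u w),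
      isB B p -> isB B p' -> simB B u w p p' ->
      simA A (lv B u) (lv B w) (mu B p) (mu B p'))
  (* (2) nu : pi_1(B,u0) -> pi_1(A,[u0]), [p] |-> [mu p], is a homomorphism
         (well defined by (1)) *)
  /\ (forall p q : bpath B u0 u0, isB B p -> isB B q ->
        simA A (lv B u0) (lv B u0) (mu B (pcat p q)) (pcat (mu B p) (mu B q)))
  (* (3) \overline{L(B,u0)} = nu(pi_1(B,u0)) ... *)
  /\ (forall x : apath A (lv B u0) (lv B u0),
        Lbar B u0 x <-> exists p : bpath B u0 u0, isB B p /\ simA A _ _ (mu B p) x)
  (* ... in particular it is a subgroup of pi_1(A,[u0]) *)
  /\ (Lbar B u0 (pnil (lv B u0) gone)
      /\ (forall x y, Lbar B u0 x -> Lbar B u0 y -> Lbar B u0 (pcat x y))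
      /\ (forall x, Lbar B u0 x -> Lbar B u0 (prev x)))
  (* (4) phi(p B_u) = mu(p) A_[u] is a well-defined, simplicial,
         base-point preserving, nu-equivariant map of Bass-Serre trees *)
  /\ ((forall X Y, tapproxB B u0 X Y -> tapproxA A (lv B u0) (phi B X) (phi B Y))
      /\ (forall X Y, isB B (projT2 X) -> isB B (projT2 Y) ->
            tadjB B u0 X Y -> tadjA A (lv B u0) (phi B X) (phi B Y))
      /\ tapproxA A (lv B u0) (phi B (tbase u0)) (tbase (lv B u0))
      /\ (forall (g : bpath B u0 u0) (X : tvert (F := FB B) u0),
            isB B g -> isB B (projT2 X) ->
            tapproxA A (lv B u0) (phi B (tact u0 g X)) (tact (lv B u0) (mu B g) (phi B X)))).
Proof.
  split; [exact (part1 B)|].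
  split; [intros p q _ _; apply part2|].
  split; [exact (part3 B u0)|].
  split; [exact (subgroup B u0)|].
  split; [exact (part4a B u0)|].
  split; [intros X Y _ _; exact (part4b B u0 X Y)|].
  split; [exact (part4c B u0)|].
  intros g X _ _. exact (part4d B u0 g X).
Qed.
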